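(* Let $p,q$ be distributions on $[n]$, $0<\varepsilon\leq1$, and $m_1\geq m_2>0$. Let $S_1$ consist of $\mathrm{Poi}(m_1)$ i.i.d. samples from $p$ and $T_1$ of $\mathrm{Poi}(m_2)$ i.i.d. samples from $q$, independent. Let $b=\frac{256\log n}{\varepsilon^2m_2}$, $b'=\frac{256\log n}{m_2}$, let $X^{S_1}_i,Y^{T_1}_i$ be the numbers of occurrences of $i$ in $S_1,T_1$, and define $B=\{i: X^{S_1}_i/m_1>b\}\cup\{i:Y^{T_1}_i/m_2>b\}$, $M=\{i: b'\leq\max\{X^{S_1}_i/m_1,Y^{T_1}_i/m_2\}\leq b\}$, $H=[n]\setminus(B\cup M)$. Then with probability $1-o(1/n)$ over $S_1,T_1$, the sets $B$, $M$ and $H$ are all faithful.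
   Context: ''Drawing $\mathrm{Poi}(m)$ samples'' means drawing $N\sim\mathrm{Poisson}(m)$ then $N$ i.i.d. samples. $B$ is faithful if every $i\in B$ has $p_i>b/2$ or $q_i>b/2$; $M$ is faithful if every $i\in M$ has $b'/2\leq\max\{p_i,q_i\}\leq2b$; $H$ is faithful if every $i\in H$ has $p_i<2b'$ and $q_i<2b'$. *)

(* Defs.v *)
From HB Require Import structures.
From mathcomp Require Import all_boot all_order all_algebra.
From mathcomp Require Import all_classical all_reals all_analysis.
Set Implicit Arguments. Unset Strict Implicit. Unset Printing Implicit Defensive.
Import Order.TTheory GRing.Theory Num.Theory.
Local Open Scope ring_scope.
Local Open Scope classical_set_scope.

Section Defs.
Context {R : realType}.

Definition is_distr (n : nat) (p : 'I_n -> R) : Prop :=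
  (forall i, 0 <= p i) /\ \sum_(i < n) p i = 1.

Definition poisson_pmf (m : R) (k : nat) : R :=
  expR (- m) * m ^+ k / (k`!)%:R.

Definition seq_prob (n k : nat) (p : 'I_n -> R) (s : k.-tuple 'I_n) : R :=
  \prod_(j <- s) p j.

Definition occ (n k : nat) (s : k.-tuple 'I_n) : 'I_n -> nat :=
  fun i => count_mem i s.

(* Probability (as an extended real) of an event E about the occurrence counts
   (X, Y) when S consists of Poi(m1) i.i.d. samples from p and, independently,
   T of Poi(m2) i.i.d. samples from q.  Literally: draw N1 ~ Poi(m1),
   N2 ~ Poi(m2) independently, then sequences S in [n]^N1, T in [n]^N2. *)
Definition prob_poi2 (n : nat) (p q : 'I_n -> R) (m1 m2 : R)
    (E : ('I_n -> nat) -> ('I_n -> nat) -> bool) : \bar R :=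
  \esum_(k in [set: nat * nat])
    (poisson_pmf m1 k.1 * poisson_pmf m2 k.2 *
      \sum_(s : k.1.-tuple 'I_n) \sum_(t : k.2.-tuple 'I_n)
        ((E (occ s) (occ t))%:R * seq_prob p s * seq_prob q t))%:E.

Definition setB (n : nat) (X Y : 'I_n -> nat) (m1 m2 b : R) : {set 'I_n} :=
  [set i | b < (X i)%:R / m1] :|: [set i | b < (Y i)%:R / m2].

Definition setM (n : nat) (X Y : 'I_n -> nat) (m1 m2 b b' : R) : {set 'I_n} :=
  [set i | (b' <= Num.max ((X i)%:R / m1) ((Y i)%:R / m2))
           && (Num.max ((X i)%:R / m1) ((Y i)%:R / m2) <= b)].

Definition setH (n : nat) (X Y : 'I_n -> nat) (m1 m2 b b' : R) : {set 'I_n} :=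
  ~: (setB X Y m1 m2 b :|: setM X Y m1 m2 b b').

Definition faithfulB (n : nat) (p q : 'I_n -> R) (b : R) (B : {set 'I_n}) : bool :=
  [forall i in B, (b / 2 < p i) || (b / 2 < q i)].

Definition faithfulM (n : nat) (p q : 'I_n -> R) (b b' : R) (M : {set 'I_n}) : bool :=
  [forall i in M, (b' / 2 <= Num.max (p i) (q i)) && (Num.max (p i) (q i) <= 2 * b)].

Definition faithfulH (n : nat) (p q : 'I_n -> R) (b' : R) (H : {set 'I_n}) : bool :=
  [forall i in H, (p i < 2 * b') && (q i < 2 * b')].

Definition all_faithful (n : nat) (p q : 'I_n -> R) (eps m1 m2 : R)
    (X Y : 'I_n -> nat) : bool :=
  let b := 256 * ln (n%:R) / (eps ^+ 2 * m2) in
  let b' := 256 * ln (n%:R) / m2 in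
  [&& faithfulB p q b (setB X Y m1 m2 b),
      faithfulM p q b b' (setM X Y m1 m2 b b')
    & faithfulH p q b' (setH X Y m1 m2 b b')].

End Defs.

(* Main.v *)
Require Import Defs.
From HB Require Import structures.
From mathcomp Require Import all_boot all_order all_algebra.
From mathcomp Require Import all_classical all_reals all_analysis.
From mathcomp Require Import ring lra.
Import Order.TTheory GRing.Theory Num.Theory.
Import numFieldNormedType.Exports.
Local Open Scope ring_scope.
Local Open Scope classical_set_scope.

Set Implicit Arguments. Unset Strict Implicit. Unset Printing Implicit Defensive.
Section S.
Context {R : realType}.

Lemma sum_tuple_cons (T : finType) k (F : k.+1.-tuple T -> R) :
  \sum_(s : k.+1.-tuple T) F s = \sum_(x : T) \sum_(s : k.-tuple T) F [tuple of x :: s].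
Proof.
rewrite pair_big /=.
rewrite (reindex (fun xs : T * k.-tuple T => [tuple of xs.1 :: xs.2])) //=.
exists (fun t : k.+1.-tuple T => (thead t, [tuple of behead t])).
  by move=> [x s] _ /=; congr (_, _); apply: val_inj.
by move=> t _; case: (tupleP t) => x s /=; apply: val_inj.
Qed.

Lemma sum_tuple_prod (T : finType) k (w : T -> R) :
  \sum_(s : k.-tuple T) \prod_(j <- s) w j = (\sum_x w x) ^+ k.
Proof.
elim: k => [|k IH].
  rewrite (big_pred1 [tuple]); last by move=> t; apply/esym/eqP; apply: tuple0.
  by rewrite big_nil expr0.
rewrite sum_tuple_cons exprS big_distrl /=.
by apply: eq_bigr => x _; rewrite -IH big_distrr /=; apply: eq_bigr => s _; rewrite big_cons.
Qed.

Lemma prod_count n (p : 'I_n -> R) i z (s : seq 'I_n) :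
  z ^+ count_mem i s * \prod_(j <- s) p j =
  \prod_(j <- s) (p j * (if j == i then z else 1)).
Proof.
elim: s => [|x s IH]; first by rewrite !big_nil expr0 mul1r.
rewrite /= !big_cons exprD -IH.
by case: (x == i); rewrite ?expr1 ?expr0; ring.
Qed.

Lemma sum_occ n k (p : 'I_n -> R) i z :
  \sum_(s : k.-tuple 'I_n) z ^+ occ s i * seq_prob p s =
  (\sum_j p j * (if j == i then z else 1)) ^+ k.
Proof.
rewrite -sum_tuple_prod; apply: eq_bigr => s _.
by rewrite /occ /seq_prob prod_count.
Qed.

Lemma distr_le1 n (p : 'I_n -> R) i : is_distr p -> 0 <= p i <= 1.
Proof.
move=> [p0 p1]; rewrite p0 /= -p1 (bigD1 i) //= lerDl.
by apply: sumr_ge0 => j _.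
Qed.

Lemma sum_w n (p : 'I_n -> R) i z : is_distr p ->
  \sum_j p j * (if j == i then z else 1) = 1 + p i * (z - 1).
Proof.
move=> [p0 p1]; rewrite (bigD1 i) //= eqxx.
have -> : \sum_(j < n | j != i) p j * (if j == i then z else 1) = 1 - p i.
  have H : \sum_(j < n | j != i) p j = 1 - p i.
    by rewrite -p1 [in RHS](bigD1 i) //= addrAC subrr add0r.
  by rewrite -H; apply: eq_bigr => j /negPf ->; rewrite mulr1.
ring.
Qed.

Definition W n (LX LY : 'I_n -> seq (R * R)) (X Y : 'I_n -> nat) : R :=
  \sum_i (\sum_(cz <- LX i) cz.1 * cz.2 ^+ X i + \sum_(cz <- LY i) cz.1 * cz.2 ^+ Y i).

Lemma sum_W n (p q : 'I_n -> R) LX LY k1 k2 : is_distr p -> is_distr q ->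
  \sum_(s : k1.-tuple 'I_n) \sum_(t : k2.-tuple 'I_n)
     (W LX LY (occ s) (occ t) * seq_prob p s * seq_prob q t) =
  \sum_i (\sum_(cz <- LX i) cz.1 * (1 + p i * (cz.2 - 1)) ^+ k1 +
          \sum_(cz <- LY i) cz.1 * (1 + q i * (cz.2 - 1)) ^+ k2).
Proof.
move=> dp dq.
have sp : \sum_(s : k1.-tuple 'I_n) seq_prob p s = 1.
  by rewrite -[1](expr1n _ k1) -dp.2 -sum_tuple_prod.
have sq : \sum_(t : k2.-tuple 'I_n) seq_prob q t = 1.
  by rewrite -[1](expr1n _ k2) -dq.2 -sum_tuple_prod.
rewrite big_split /=.
transitivity (\sum_(s : k1.-tuple 'I_n) \sum_(t : k2.-tuple 'I_n)
  ((\sum_i \sum_(cz <- LX i) cz.1 * cz.2 ^+ occ s i) * seq_prob p s * seq_prob q t) +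
  \sum_(s : k1.-tuple 'I_n) \sum_(t : k2.-tuple 'I_n)
   ((\sum_i \sum_(cz <- LY i) cz.1 * cz.2 ^+ occ t i) * seq_prob p s * seq_prob q t)).
  rewrite -big_split; apply: eq_bigr => s _; rewrite -big_split; apply: eq_bigr => t _.
  by rewrite /W big_split /=; ring.
congr (_ + _).
  rewrite (eq_bigr (fun s : k1.-tuple 'I_n =>
      (\sum_i \sum_(cz <- LX i) cz.1 * cz.2 ^+ occ s i) * seq_prob p s)); last first.
    by move=> s _; rewrite -big_distrr /= sq mulr1.
  under eq_bigr do rewrite big_distrl /=.
  rewrite exchange_big /=; apply: eq_bigr => i _.
  under eq_bigr do rewrite big_distrl /=.
  rewrite exchange_big /=; apply: eq_bigr => cz _.
  rewrite -sum_w // -sum_occ big_distrr /=.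
  by apply: eq_bigr => s _; rewrite mulrA.
rewrite exchange_big /=.
rewrite (eq_bigr (fun t : k2.-tuple 'I_n =>
    (\sum_i \sum_(cz <- LY i) cz.1 * cz.2 ^+ occ t i) * seq_prob q t)); last first.
  by move=> t _; rewrite -big_distrl /= -big_distrr /= sp mulr1.
under eq_bigr do rewrite big_distrl /=.
rewrite exchange_big /=; apply: eq_bigr => i _.
under eq_bigr do rewrite big_distrl /=.
rewrite exchange_big /=; apply: eq_bigr => cz _.
rewrite -sum_w // -sum_occ big_distrr /=.
by apply: eq_bigr => s _; rewrite mulrA.
Qed.

Lemma series_ub (h : nat -> R) (c : R) : (forall k, 0 <= h k) ->
  (forall K, \sum_(k < K) h k <= c) -> (\sum_(k <oo) (h k)%:E <= c%:E)%E.
Proof.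
move=> h0 hc; apply: lime_le.
  by apply: is_cvg_nneseries => k _ _; rewrite lee_fin.
by apply: nearW => K; rewrite sumEFin lee_fin big_mkord.
Qed.
Lemma exp_partial (x : R) K : 0 <= x -> \sum_(k < K) x ^+ k / k`!%:R <= expR x.
Proof.
move=> x0; rewrite /expR.
have := @nondecreasing_cvgn_le _ (series (exp_coeff x)) _ (is_cvg_series_exp_coeff x) K.
rewrite /series /= big_mkord; apply.
apply: nondecreasing_series => k _ _; rewrite /exp_coeff /=.
by rewrite divr_ge0 ?exprn_ge0.
Qed.
Lemma pois_partial (m A : R) K : 0 <= m -> 0 <= A ->
  \sum_(k < K) Defs.poisson_pmf m k * A ^+ k <= expR (m * (A - 1)).
Proof.
move=> m0 A0.
rewrite mulrBr mulr1 addrC expRD -[in X in _ <= X * _]mulN1r mulN1r.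
rewrite (eq_bigr (fun k : 'I_K => expR (- m) * ((m * A) ^+ k / k`!%:R))); last first.
  by move=> k _; rewrite /Defs.poisson_pmf exprMn; field; rewrite pnatr_eq0 -lt0n fact_gt0.
rewrite -big_distrr /= ler_pM2l ?expR_gt0 //.
by apply: exp_partial; rewrite mulr_ge0.
Qed.

Notation pois := (@Defs.poisson_pmf R).

Lemma pois_ge0 m k : 0 <= m -> 0 <= pois m k.
Proof.
move=> m0; rewrite /Defs.poisson_pmf divr_ge0 ?mulr_ge0 ?expR_ge0 ?exprn_ge0 //.
Qed.

Lemma base_ge0 (p z : R) : 0 <= p <= 1 -> 0 <= z -> 0 <= 1 + p * (z - 1).
Proof.
move=> /andP[p0 p1] z0; have pz := mulr_ge0 p0 z0.
rewrite mulrBr mulr1; lra.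
Qed.

Lemma pois_partial1 (m p z : R) K : 0 <= m -> 0 <= p <= 1 -> 0 <= z ->
  \sum_(k < K) pois m k * (1 + p * (z - 1)) ^+ k <= expR (m * (p * (z - 1))).
Proof.
move=> m0 hp z0; have := pois_partial K m0 (base_ge0 hp z0).
by rewrite [1 + _]addrC addrK.
Qed.

Definition nonnegL n (L : 'I_n -> seq (R * R)) :=
  forall i cz, cz \in L i -> 0 <= cz.1 /\ 0 <= cz.2.

Lemma UL_ge0 n (p : 'I_n -> R) (L : 'I_n -> seq (R * R)) k :
  (forall i, 0 <= p i <= 1) -> nonnegL L ->
  0 <= \sum_i \sum_(cz <- L i) cz.1 * (1 + p i * (cz.2 - 1)) ^+ k.
Proof.
move=> hp hL; apply: sumr_ge0 => i _; rewrite big_seq; apply: sumr_ge0 => cz czL.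
have [c0 z0] := hL i cz czL.
by rewrite mulr_ge0 // exprn_ge0 // base_ge0.
Qed.

Lemma pois_sumL n (m : R) (p : 'I_n -> R) (L : 'I_n -> seq (R * R)) K :
  0 <= m -> (forall i, 0 <= p i <= 1) -> nonnegL L ->
  \sum_(k < K) pois m k * (\sum_i \sum_(cz <- L i) cz.1 * (1 + p i * (cz.2 - 1)) ^+ k)
  <= \sum_i \sum_(cz <- L i) cz.1 * expR (m * (p i * (cz.2 - 1))).
Proof.
move=> m0 hp hL.
under eq_bigr do rewrite big_distrr /=.
rewrite exchange_big /=; apply: ler_sum => i _.
under eq_bigr do rewrite big_distrr /=.
rewrite exchange_big /= [leRHS]big_seq [leLHS]big_seq; apply: ler_sum => cz czL.
have [c0 z0] := hL i cz czL.
rewrite (eq_bigr (fun k : 'I_K => cz.1 * (pois m k * (1 + p i * (cz.2 - 1)) ^+ k))); last first.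
  by move=> k _; ring.
by rewrite -big_distrr /= ler_wpM2l // pois_partial1.
Qed.


Lemma seq_prob_ge0 n k (p : 'I_n -> R) (s : k.-tuple 'I_n) :
  (forall i, 0 <= p i) -> 0 <= seq_prob p s.
Proof. by move=> p0; rewrite /seq_prob; apply: prodr_ge0 => j _. Qed.

Lemma prob_bound n (p q : 'I_n -> R) (m1 m2 : R)
  (E : ('I_n -> nat) -> ('I_n -> nat) -> bool) (LX LY : 'I_n -> seq (R * R)) :
  is_distr p -> is_distr q -> 0 <= m1 -> 0 <= m2 -> nonnegL LX -> nonnegL LY ->
  (forall X Y, (E X Y)%:R <= W LX LY X Y) ->
  (prob_poi2 p q m1 m2 E <=
   (\sum_i (\sum_(cz <- LX i) cz.1 * expR (m1 * (p i * (cz.2 - 1))) +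
            \sum_(cz <- LY i) cz.1 * expR (m2 * (q i * (cz.2 - 1)))))%:E)%E.
Proof.
move=> dp dq m10 m20 hX hY hE.
have hp i : 0 <= p i <= 1 by apply: distr_le1.
have hq i : 0 <= q i <= 1 by apply: distr_le1.
set U := fun k => \sum_i \sum_(cz <- LX i) cz.1 * (1 + p i * (cz.2 - 1)) ^+ k.
set V := fun k => \sum_i \sum_(cz <- LY i) cz.1 * (1 + q i * (cz.2 - 1)) ^+ k.
set Ub := \sum_i \sum_(cz <- LX i) cz.1 * expR (m1 * (p i * (cz.2 - 1))).
set Vb := \sum_i \sum_(cz <- LY i) cz.1 * expR (m2 * (q i * (cz.2 - 1))).
set S := fun k1 k2 => \sum_(s : k1.-tuple 'I_n) \sum_(t : k2.-tuple 'I_n)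
        ((E (occ s) (occ t))%:R * seq_prob p s * seq_prob q t).
have S0 k1 k2 : 0 <= S k1 k2.
  apply: sumr_ge0 => s _; apply: sumr_ge0 => t _.
  by rewrite !mulr_ge0 ?seq_prob_ge0 // => i; case/andP: (hp i); case/andP: (hq i).
have SUV k1 k2 : S k1 k2 <= U k1 + V k2.
  rewrite /U /V -big_split /= -(sum_W LX LY) //.
  apply: ler_sum => s _; apply: ler_sum => t _.
  rewrite ler_wpM2r ?ler_wpM2r ?seq_prob_ge0 ?hE // => i.
    by case/andP: (hq i).
  by case/andP: (hp i).
have U0 k : 0 <= U k by apply: UL_ge0.
have V0 k : 0 <= V k by apply: UL_ge0.
have h0 k1 k2 : 0 <= pois m1 k1 * pois m2 k2 * S k1 k2.
  by rewrite mulr_ge0 ?S0 // mulr_ge0 // pois_ge0.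
rewrite /prob_poi2.
have -> : [set: nat * nat] = [set: nat] `*`` (fun _ => [set: nat]).
  by apply/seteqP; split => -[a b].
rewrite -(esum_esum (a := fun k1 k2 => (pois m1 k1 * pois m2 k2 * S k1 k2)%:E)); last first.
  by move=> i j _ _; rewrite lee_fin.
apply: (@le_trans _ _ (\esum_(k1 in [set: nat]) (pois m1 k1 * U k1 + pois m1 k1 * Vb)%:E)).
  apply: le_esum => k1 _.
  rewrite -nneseries_esumT; last by move=> k; rewrite lee_fin.
  apply: series_ub => // K.
  apply: (@le_trans _ _ (\sum_(k < K) (pois m1 k1 * (pois m2 k * U k1) + pois m1 k1 * (pois m2 k * V k)))).
    apply: ler_sum => k _ /=; rewrite -mulrA -mulrDr -mulrDr ler_wpM2l ?pois_ge0 //.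
    by rewrite ler_wpM2l ?pois_ge0.
  rewrite big_split /= -!big_distrr /= lerD // ler_wpM2l ?pois_ge0 //.
    rewrite -big_distrl /= -[leRHS]mul1r ler_wpM2r //.
    have := @pois_partial1 m2 0 1 K m20.
    rewrite mul0r mulr0 expR0 addr0 lexx ler01 => /(_ isT isT) H.
    by rewrite (eq_bigr (fun k : 'I_K => pois m2 k)) in H => // k _; rewrite expr1n mulr1.
  exact: pois_sumL.
have Vb0 : 0 <= Vb.
  by apply: sumr_ge0 => i _; rewrite big_seq; apply: sumr_ge0 => cz czL; case: (hY i cz czL) => c0 z0; rewrite mulr_ge0 ?expR_ge0.
rewrite -nneseries_esumT; last by move=> k /=; rewrite lee_fin; apply: addr_ge0; apply: mulr_ge0; rewrite ?pois_ge0 ?U0.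
rewrite big_split /=; apply: series_ub.
  by move=> k; apply: addr_ge0; apply: mulr_ge0; rewrite ?pois_ge0 ?U0.
move=> K /=; rewrite big_split /= -big_distrl /= lerD //.
  exact: pois_sumL.
rewrite -[leRHS]mul1r ler_wpM2r //.
have := @pois_partial1 m1 0 1 K m10.
rewrite mul0r mulr0 expR0 addr0 lexx ler01 => /(_ isT isT) H.
by rewrite (eq_bigr (fun k : 'I_K => pois m1 k)) in H => // k _; rewrite expr1n mulr1.
Qed.



Lemma expR_ge1 (x : R) : 0 <= x -> 1 <= expR x.
Proof. by move=> x0; apply: le_trans (expR_ge1Dx x); lra. Qed.

Lemma up_one (a : R) (x : nat) : a <= x%:R -> 1 <= expR (- (a / 4)) * expR (1/4) ^+ x.
Proof.
move=> ax; rewrite -expRM_natr -expRD; apply: expR_ge1; lra.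
Qed.

Lemma lo_one (a : R) (x : nat) : x%:R <= a -> 1 <= expR a * expR (-1) ^+ x.
Proof.
move=> ax; rewrite -expRM_natr -expRD; apply: expR_ge1; lra.
Qed.

Definition Lst (b b' m pi : R) : seq (R * R) :=
 [:: (expR (- (b * m / 4)) * (pi <= b / 2)%R%:R, expR (1/4));
     (expR (- (b' * m / 4)) * (pi < b' / 2)%R%:R, expR (1/4));
     (expR (b * m) * (2 * b < pi)%R%:R, expR (-1));
     (expR (b' * m) * (2 * b' <= pi)%R%:R, expR (-1))].

Lemma Lst_nonneg b b' m pi cz : cz \in Lst b b' m pi -> 0 <= cz.1 /\ 0 <= cz.2.
Proof.
rewrite !inE => /or4P[] /eqP -> /=; split; rewrite ?expR_ge0 // mulr_ge0 ?expR_ge0 //;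
  by case: (_ <= _); case: (_ < _).
Qed.

Lemma Lst_T_ge0 b b' m pi (x : nat) :
  0 <= \sum_(cz <- Lst b b' m pi) cz.1 * cz.2 ^+ x.
Proof.
rewrite big_seq; apply: sumr_ge0 => cz /Lst_nonneg [c0 z0].
by rewrite mulr_ge0 ?exprn_ge0.
Qed.

Lemma Lst_facts b b' m pi (x : nat) : 0 < m ->
  \sum_(cz <- Lst b b' m pi) cz.1 * cz.2 ^+ x < 1 ->
  [/\ pi <= b/2 -> x%:R / m <= b, pi < b'/2 -> x%:R / m < b',
      2 * b < pi -> b < x%:R / m & 2 * b' <= pi -> b' <= x%:R / m].
Proof.
move=> m0; rewrite /Lst !big_cons big_nil addr0 /=.
set t1 := _ * _ ^+ x; set t2 := _ * _ ^+ x; set t3 := _ * _ ^+ x; set t4 := _ * _ ^+ x.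
have t10 : 0 <= t1 by rewrite mulr_ge0 ?exprn_ge0 ?expR_ge0 ?mulr_ge0 ?expR_ge0 //; case: (_ <= _).
have t20 : 0 <= t2 by rewrite mulr_ge0 ?exprn_ge0 ?expR_ge0 ?mulr_ge0 ?expR_ge0 //; case: (_ < _).
have t30 : 0 <= t3 by rewrite mulr_ge0 ?exprn_ge0 ?expR_ge0 ?mulr_ge0 ?expR_ge0 //; case: (_ < _).
have t40 : 0 <= t4 by rewrite mulr_ge0 ?exprn_ge0 ?expR_ge0 ?mulr_ge0 ?expR_ge0 //; case: (_ <= _).
move=> hT.
have h1 : t1 < 1 by lra.
have h2 : t2 < 1 by lra.
have h3 : t3 < 1 by lra.
have h4 : t4 < 1 by lra.
split.
- move=> c; rewrite ler_pdivrMr //; rewrite leNgt; apply/negP => hx.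
  move: h1; rewrite /t1 c mulr1; apply/negP; rewrite -leNgt; apply: up_one.
  exact: ltW.
- move=> c; rewrite ltr_pdivrMr //; rewrite ltNge; apply/negP => hx.
  move: h2; rewrite /t2 c mulr1; apply/negP; rewrite -leNgt; apply: up_one.
  by [].
- move=> c; rewrite ltr_pdivlMr //; rewrite ltNge; apply/negP => hx.
  by move: h3; rewrite /t3 c mulr1; apply/negP; rewrite -leNgt; apply: lo_one.
- move=> c; rewrite ler_pdivlMr //; rewrite leNgt; apply/negP => hx.
  move: h4; rewrite /t4 c mulr1; apply/negP; rewrite -leNgt; apply: lo_one.
  exact: ltW.
Qed.

Lemma faithful_of n (p q : 'I_n -> R) (m1 m2 b b' : R) (X Y : 'I_n -> nat) :
  0 < m1 -> 0 < m2 ->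
  (forall i, \sum_(cz <- Lst b b' m1 (p i)) cz.1 * cz.2 ^+ X i +
             \sum_(cz <- Lst b b' m2 (q i)) cz.1 * cz.2 ^+ Y i < 1) ->
  [&& faithfulB p q b (setB X Y m1 m2 b),
      faithfulM p q b b' (setM X Y m1 m2 b b')
    & faithfulH p q b' (setH X Y m1 m2 b b')].
Proof.
move=> m10 m20 H.
have F i : [/\ p i <= b/2 -> (X i)%:R / m1 <= b, p i < b'/2 -> (X i)%:R / m1 < b',
      2 * b < p i -> b < (X i)%:R / m1 & 2 * b' <= p i -> b' <= (X i)%:R / m1] /\
    [/\ q i <= b/2 -> (Y i)%:R / m2 <= b, q i < b'/2 -> (Y i)%:R / m2 < b',
      2 * b < q i -> b < (Y i)%:R / m2 & 2 * b' <= q i -> b' <= (Y i)%:R / m2].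
  have := H i; have := Lst_T_ge0 b b' m1 (p i) (X i); have := Lst_T_ge0 b b' m2 (q i) (Y i).
  move=> h1 h2 h3; split; apply: Lst_facts => //; lra.
apply/and3P; split.
- apply/forallP => i; apply/implyP; rewrite !inE => hB.
  have [[f1 _ _ _] [g1 _ _ _]] := F i.
  case/orP: hB => hB; apply/orP.
    by left; rewrite ltNge; apply/negP => /f1; rewrite leNgt hB.
  by right; rewrite ltNge; apply/negP => /g1; rewrite leNgt hB.
- apply/forallP => i; apply/implyP; rewrite !inE => /andP[hl hu].
  have [[_ f2 f3 _] [_ g2 g3 _]] := F i.
  apply/andP; split.
    rewrite leNgt; apply/negP; rewrite gt_max => /andP[pl ql].
    move: hl; rewrite le_max => /orP[] h.
      by have := f2 pl; rewrite ltNge h.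
    by have := g2 ql; rewrite ltNge h.
  rewrite leNgt; apply/negP; rewrite lt_max => /orP[] h.
    by move: hu; rewrite ge_max => /andP[hu _]; have := f3 h; rewrite ltNge hu.
  by move: hu; rewrite ge_max => /andP[_ hu]; have := g3 h; rewrite ltNge hu.
- apply/forallP => i; apply/implyP; rewrite !inE negb_or => /andP[nB nM].
  have [[_ _ _ f4] [_ _ _ g4]] := F i.
  move: nB nM; rewrite negb_or -!leNgt => /andP[bX bY] nM.
  apply/andP; split; rewrite ltNge; apply/negP => h; move: nM; apply/negP; rewrite negbK.
    by rewrite ge_max bX bY le_max (f4 h).
  by rewrite ge_max bX bY le_max (g4 h) orbT.
Qed.

Lemma expR14 : expR (1/4 : R) <= 4/3.
Proof.
have h := expR_ge1Dx (- (1/4) : R).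
have e := expRxMexpNx_1 (1/4 : R).
have p := expR_gt0 (1/4 : R).
nra.
Qed.

Lemma expRm1 : expR (-1 : R) <= 4/9.
Proof.
have h := expR_ge1Dx (1/2 : R).
have e1 : expR (1 : R) = expR (1/2) * expR (1/2) by rewrite -expRD; congr expR; lra.
have e := expRxMexpNx_1 (1 : R).
have p := expR_gt0 (-1 : R).
have p2 := expR_gt0 (1/2 : R).
have E1 : 9/4 <= expR (1 : R).
  rewrite e1; have := ler_pM _ _ h h; rewrite !le0r /=.
  move=> H; apply: le_trans (H _ _); lra.
have w : expR (-1 : R) = (expR 1)^-1 by rewrite -expRN.
rewrite w -[4/9](invrK) lef_pV2 ?posrE; lra.
Qed.

Lemma term_up (L a m pi : R) : 0 <= L -> 36 * L <= a -> 0 <= m -> 0 <= pi ->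
  m * pi <= a / 2 ->
  expR (- (a / 4)) * expR (m * (pi * (expR (1/4) - 1))) <= expR (- (3 * L)).
Proof.
move=> L0 La m0 p0 hmp; rewrite -expRD ler_expR.
have mp0 : 0 <= m * pi by rewrite mulr_ge0.
have h := expR14.
have -> : m * (pi * (expR (1 / 4) - 1)) = (m * pi) * (expR (1 / 4) - 1) by ring.
have : (m * pi) * (expR (1 / 4) - 1) <= (m * pi) * (1/3).
  by apply: ler_wpM2l => //; lra.
lra.
Qed.

Lemma term_lo (L a m pi : R) : 0 <= L -> 27 * L <= a -> 0 <= m ->
  2 * a <= m * pi ->
  expR a * expR (m * (pi * (expR (-1) - 1))) <= expR (- (3 * L)).
Proof.
move=> L0 La m0 hmp; rewrite -expRD ler_expR.
have h := expRm1.
have -> : m * (pi * (expR (-1) - 1)) = (m * pi) * (expR (-1) - 1) by ring.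
have mp0 : 0 <= m * pi by lra.
have : (m * pi) * (expR (-1) - 1) <= (m * pi) * (- (5/9)).
  by apply: ler_wpM2l => //; lra.
lra.
Qed.

Lemma Lst_bound (L b b' m pi : R) : 0 <= L -> 36 * L <= b * m -> 36 * L <= b' * m ->
  0 <= m -> 0 <= pi ->
  \sum_(cz <- Lst b b' m pi) cz.1 * expR (m * (pi * (cz.2 - 1))) <= 4 * expR (- (3 * L)).
Proof.
move=> L0 hb hb' m0 p0; rewrite /Lst !big_cons big_nil addr0 /=.
have E0 := expR_ge0 (- (3 * L)).
have t1 : expR (- (b * m / 4)) * (pi <= b / 2)%R%:R * expR (m * (pi * (expR (1 / 4) - 1))) <= expR (- (3 * L)).
  case: (boolP (pi <= b / 2)%R) => c /=; rewrite ?mulr1n ?mulr0n; last by rewrite mulr0 mul0r.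
  rewrite mulr1; apply: term_up => //.
  have := ler_wpM2l m0 c; lra.
have t2 : expR (- (b' * m / 4)) * (pi < b' / 2)%R%:R * expR (m * (pi * (expR (1 / 4) - 1))) <= expR (- (3 * L)).
  case: (boolP (pi < b' / 2)%R) => c /=; rewrite ?mulr1n ?mulr0n; last by rewrite mulr0 mul0r.
  rewrite mulr1; apply: term_up => //.
  have := ler_wpM2l m0 (ltW c); lra.
have t3 : expR (b * m) * (2 * b < pi)%R%:R * expR (m * (pi * (expR (-1) - 1))) <= expR (- (3 * L)).
  case: (boolP (2 * b < pi)%R) => c /=; rewrite ?mulr1n ?mulr0n; last by rewrite mulr0 mul0r.
  rewrite mulr1; apply: term_lo => //; first lra.
  have := ler_wpM2l m0 (ltW c); lra.
have t4 : expR (b' * m) * (2 * b' <= pi)%R%:R * expR (m * (pi * (expR (-1) - 1))) <= expR (- (3 * L)).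
  case: (boolP (2 * b' <= pi)%R) => c /=; rewrite ?mulr1n ?mulr0n; last by rewrite mulr0 mul0r.
  rewrite mulr1; apply: term_lo => //; first lra.
  have := ler_wpM2l m0 c; lra.
lra.
Qed.
End S.

Theorem lemma7 (R : realType) :
  exists f : nat -> R,
    ((n%:R * f n) @[n --> \oo] --> (0 : R)) /\
    forall (n : nat) (p q : 'I_n -> R) (eps m1 m2 : R),
      (0 < n)%N -> is_distr p -> is_distr q ->
      0 < eps -> eps <= 1 -> 0 < m2 -> m2 <= m1 ->
      (prob_poi2 p q m1 m2
         (fun X Y => ~~ all_faithful p q eps m1 m2 X Y) <= (f n)%:E)%E.
Proof.
exists (fun n => 8 / n%:R ^+ 2); split.
  rewrite -cvg_shiftS.
  have -> : [sequence (n.+1)%:R * (8 / (n.+1)%:R ^+ 2)]_n = (fun n => 8 * @harmonic R n).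
    by apply/funext => k /=; field; rewrite addrC natr1 pnatr_eq0.
  have H := cvgMl_tmp (a := (8 : R)) (@cvg_harmonic R); rewrite mulr0 in H; exact: H.
move=> n p q eps m1 m2 n0 dp dq e0 e1 m20 m21.
set L := ln (n%:R : R).
set b := 256 * L / (eps ^+ 2 * m2).
set b' := 256 * L / m2.
have m10 : 0 < m1 by apply: lt_le_trans m21.
have L0 : 0 <= L by apply: ln_ge0; rewrite ler1n.
have b'0 : 0 <= b' by rewrite /b' divr_ge0 // ?mulr_ge0 // ltW.
have hb'2 : b' * m2 = 256 * L by rewrite /b' divfK // gt_eqF.
have bb : b' <= b.
  have e20 : 0 < eps ^+ 2 by rewrite exprn_gt0.
  have e21 : eps ^+ 2 <= 1 by rewrite expr_le1 // ltW.
  have -> : b = b' / eps ^+ 2.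
    by rewrite /b /b'; field; rewrite ?gt_eqF.
  by rewrite ler_peMr // invf_ge1.
have hX1 : 36 * L <= b * m1.
  have : b' * m2 <= b * m1 by exact: (ler_pM b'0 (ltW m20) bb m21).
  lra.
have hX2 : 36 * L <= b' * m1.
  have : b' * m2 <= b' * m1 by apply: ler_wpM2l.
  lra.
have hY1 : 36 * L <= b * m2.
  have : b' * m2 <= b * m2 by apply: ler_wpM2r => //; rewrite ltW.
  lra.
have hY2 : 36 * L <= b' * m2 by lra.
apply: le_trans (prob_bound (LX := fun i => Lst b b' m1 (p i))
                            (LY := fun i => Lst b b' m2 (q i)) _ _ _ _ _ _ _) _ => //.
- exact: ltW.
- exact: ltW.
- by move=> i cz /Lst_nonneg.
- by move=> i cz /Lst_nonneg.
- move=> X Y.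
  have W0 : 0 <= W (fun i => Lst b b' m1 (p i)) (fun i => Lst b b' m2 (q i)) X Y.
    by apply: sumr_ge0 => i _; rewrite addr_ge0 ?Lst_T_ge0.
  case hF : (all_faithful p q eps m1 m2 X Y) => //=.
  rewrite leNgt; apply/negP => hW; move/negP: hF; apply.
  rewrite /all_faithful /=; apply: faithful_of => // i.
  apply: le_lt_trans hW; rewrite /W (bigD1 i) //= lerDl.
  by apply: sumr_ge0 => j _; rewrite addr_ge0 ?Lst_T_ge0.
rewrite lee_fin.
have e3 : expR (- (3 * L)) = (n%:R ^+ 3)^-1.
  by rewrite expRN expRM_natl /L lnK // posrE ltr0n.
apply: (@le_trans _ _ (\sum_(i < n) (8 * (n%:R ^+ 3)^-1 : R))).
  apply: ler_sum => i _; rewrite -e3.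
  have hp := distr_le1 i dp; have hq := distr_le1 i dq.
  case/andP: hp => hp0 _; case/andP: hq => hq0 _.
  have := Lst_bound (pi := p i) L0 hX1 hX2 (ltW m10) hp0.
  have := Lst_bound (pi := q i) L0 hY1 hY2 (ltW m20) hq0.
  lra.
rewrite sumr_const card_ord -mulr_natl.
have n0' : (n%:R : R) != 0 by rewrite pnatr_eq0 -lt0n.
by rewrite le_eqVlt; apply/orP; left; apply/eqP; field.
Qed.
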